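(* Fix a dimension $D\geqslant 2$. For any integer $r\geqslant 4$, any integer $m$ with $1\leqslant m\leqslant r/4$, and any integer $n$ with $2r m^{D-1}\leqslant n\leqslant r^D$, there is a subset $S$ of $n$ points of the integer grid $\{0,1,\dots,r-1\}^D$ such that $$\Delta(S, m^D-1)\geqslant \frac{r}{2m}-1.$$
   Context: For a graph $G$ whose vertices are points in $\mathbb{R}^D$, each edge $(u,v)$ has weight equal to the Euclidean distance $d(u,v)$ (edges may cross or overlap), and $d_G(u,v)$ is the length of a shortest path in $G$ between $u$ and $v$. The dilation of $G$ is $\Delta(G)=\max_{u\neq v\in V(G)} d_G(u,v)/d(u,v)$ (infinite if $G$ is disconnected). For a finite set $S$ of $n$ points and an integer $k\ge0$, $\Delta(S,k)$ is the minimum of $\Delta(G)$ over all graphs $G$ with vertex set exactly $S$ and exactly $n-1+k$ edges. *)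

(* Defs.v *)
From HB Require Import structures.
From mathcomp Require Import all_boot all_order all_algebra.
From mathcomp Require Import all_classical all_reals.
From mathcomp Require Import ereal.
Set Implicit Arguments. Unset Strict Implicit. Unset Printing Implicit Defensive.
Import Order.TTheory GRing.Theory Num.Theory.
Local Open Scope classical_set_scope.
Local Open Scope ring_scope.

Definition gridpt (D r : nat) := {ffun 'I_D -> 'I_r}.

Section Geometry.
Variables (R : realType) (D r : nat).
Local Notation pt := (gridpt D r).

Definition edist (x y : pt) : R :=
  Num.sqrt (\sum_(i < D) (((x i : nat)%:R - (y i : nat)%:R) ^+ 2)).

Definition is_graph_on (S : {set pt}) (E : {set {set pt}}) : Prop :=
  forall e, e \in E -> (#|e| = 2)%N /\ e \subset S.

(* A walk u = x_0, x_1, ..., x_k = v in the graph E (p = [x_1; ...; x_k]). *)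
Definition is_walk (E : {set {set pt}}) (u v : pt) (p : seq pt) : Prop :=
  path (fun x y => ([set x; y])%SET \in E) u p /\ last u p = v.

Definition walk_len (u : pt) (p : seq pt) : R :=
  \sum_(xy <- zip (u :: p) p) edist xy.1 xy.2.

(* Shortest-path distance d_G(u,v) (+oo if no path). *)
Definition graph_dist (E : {set {set pt}}) (u v : pt) : \bar R :=
  ereal_inf [set (walk_len u p)%:E | p in [set p | is_walk E u v p]].

(* Dilation of the graph with vertex set S and edge set E
   (+oo if the graph is disconnected). *)
Definition dilation (S : {set pt}) (E : {set {set pt}}) : \bar R :=
  ereal_sup [set (graph_dist E uv.1 uv.2 * ((edist uv.1 uv.2)^-1)%:E)%E
            | uv in [set uv : pt * pt | (uv.1 \in S) && (uv.2 \in S) && (uv.1 != uv.2)]].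

Definition Delta (S : {set pt}) (k : nat) : \bar R :=
  ereal_inf [set dilation S E
            | E in [set E : {set {set pt}} | is_graph_on S E /\ #|E| = (#|S| - 1 + k)%N]].

End Geometry.

(* Main.v *)
Require Import Defs.
From HB Require Import structures.
From mathcomp Require Import all_boot all_order all_algebra.
From mathcomp Require Import all_classical all_reals.
From mathcomp Require Import ereal.
From mathcomp Require Import zify.
Import Order.TTheory GRing.Theory Num.Theory.
Set Implicit Arguments. Unset Strict Implicit. Unset Printing Implicit Defensive.

Section Count.
Variables (T C : finType).

Definition parity (h : T -> T -> bool) (u : T) (p : seq T) :=
  \big[addb/false]_(xy <- zip (u :: p) p) h xy.1 xy.2.

Lemma parity_cons h u y p : parity h u (y :: p) = h u y (+) parity h y p.
Proof. by rewrite /parity /= big_cons. Qed.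

Lemma parity_tele (s : T -> bool) u p :
  parity (fun x y => s x (+) s y) u p = s u (+) s (last u p).
Proof.
elim: p u => [|y p IH] u; first by rewrite /parity big_nil addbb.
rewrite parity_cons IH /=; by case: (s u); case: (s y); case: (s (last y p)).
Qed.

Variables (S : {set T}) (E : {set {set T}}).
Hypothesis Ecard : forall e, e \in E -> #|e| = 2.
Variable g : C -> T -> T -> bool.
Hypothesis gsym : forall c x y, g c x y = g c y x.

Definition wlk (u v : T) (p : seq T) :=
  path (fun x y => [set x; y] \in E) u p /\ last u p = v.

Definition vl (I : {set C}) (F : {set T}) x y :=
  (\big[addb/false]_(i in I) g i x y) (+) (x \in F) (+) (y \in F).

Lemma vl_sym I F x y : vl I F x y = vl I F y x.
Proof.
rewrite /vl (eq_bigr (fun i => g i y x)); last by move=> i _; rewrite gsym.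
by case: (\big[addb/false]_(i in I) g i y x); case: (x \in F); case: (y \in F).
Qed.

Definition Phi (IF : {set C} * {set T}) :=
  [set e in E | [exists x, exists y, (e == [set x; y]) && vl IF.1 IF.2 x y]].

Lemma set2_inv (x y x' y' : T) : x != y -> [set x; y] = [set x'; y'] ->
  (x' = x /\ y' = y) \/ (x' = y /\ y' = x).
Proof.
move=> nxy E2.
have hx' : x' \in [set x; y] by rewrite E2 !inE eqxx.
have hy' : y' \in [set x; y] by rewrite E2 !inE eqxx orbT.
have hx : x \in [set x'; y'] by rewrite -E2 !inE eqxx.
have hy : y \in [set x'; y'] by rewrite -E2 !inE eqxx orbT.
move: hx hy; case/set2P: hx' => ->; case/set2P: hy' => -> hx hy; auto.
- by case/set2P: hy => E'; rewrite E' eqxx in nxy.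
- by case/set2P: hx => E'; rewrite E' eqxx in nxy.
Qed.

Lemma memPhi IF x y : [set x; y] \in E -> ([set x; y] \in Phi IF) = vl IF.1 IF.2 x y.
Proof.
move=> Ee.
have nxy : x != y by move: (Ecard Ee); rewrite cards2; case: (x != y).
rewrite inE Ee /=; apply/existsP/idP.
  case=> x' /existsP [y'] /andP [/eqP E2 V].
  by move: V; case: (set2_inv nxy E2) => [[-> ->]|[-> ->]] //; rewrite vl_sym.
by move=> V; exists x; apply/existsP; exists y; rewrite eqxx.
Qed.

Lemma parity_Phi IF JF u p : Phi IF = Phi JF ->
  path (fun x y => [set x; y] \in E) u p ->
  parity (vl IF.1 IF.2) u p = parity (vl JF.1 JF.2) u p.
Proof.
move=> EP; elim: p u => [|y p IH] u; first by rewrite /parity !big_nil.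
rewrite /= => /andP [Ee Hp]; rewrite !parity_cons IH // -!memPhi // EP //.
Qed.

Lemma parity_vl I F u p :
  parity (vl I F) u p =
  (\big[addb/false]_(i in I) parity (g i) u p) (+) (u \in F) (+) (last u p \in F).
Proof.
elim: p u => [|y p IH] u.
  rewrite /parity big_nil big1 ?addbb // => i _; by rewrite big_nil.
rewrite parity_cons IH /vl.
rewrite [in RHS](eq_bigr (fun i => g i u y (+) parity (g i) y p)); last first.
  by move=> i _; rewrite parity_cons.
rewrite big_split.
move: (\big[addb/false]_(i in I) g i u y) (\big[addb/false]_(i in I) parity (g i) y p).
by move=> a b; case: a; case: b; case: (u \in F); case: (y \in F); case: (last _ _ \in F).
Qed.

Variable ring : C -> seq (T * T).
Hypothesis ring_closed : forall c (f : T -> bool),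
  \big[addb/false]_(e <- ring c) (f e.1 (+) f e.2) = false.
Hypothesis ring_sum : forall c c',
  \big[addb/false]_(e <- ring c') g c e.1 e.2 = (c == c').
Hypothesis ring_walk : forall c' e, e \in ring c' ->
  exists p, wlk e.1 e.2 p /\ forall c, parity (g c) e.1 p = g c e.1 e.2.
Variable root : T.
Hypothesis rootS : root \in S.
Hypothesis conn : forall x, x \in S -> exists p, wlk root x p.
Hypothesis Ecount : #|E| = (#|S| - 1 + (#|C| - 1))%N.
Hypothesis Cpos : 0 < #|C|.

Lemma vl_ring c' I F :
  \big[addb/false]_(e <- ring c') vl I F e.1 e.2 = (c' \in I).
Proof.
rewrite /vl.
rewrite (eq_bigr (fun e => (\big[addb/false]_(i in I) g i e.1 e.2) (+) ((e.1 \in F) (+) (e.2 \in F))));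
  last by move=> e _; rewrite addbA.
rewrite big_split /= ring_closed addbF exchange_big /=.
rewrite (eq_bigr (fun i => i == c')); last by move=> i _; rewrite ring_sum.
case: (boolP (c' \in I)) => cI.
  rewrite (bigD1 c') //= eqxx big1 // => i /andP [_ /negbTE ->] //.
by rewrite big1 // => i iI; apply/negbTE; apply: contraNneq cI => <-.
Qed.

Lemma count_contra : False.
Proof.
pose Dom := finset.setX (powerset [set: C]) (powerset (S :\ root)).
have inj : {in Dom &, injective Phi}.
  move=> [I F] [J F'] ; rewrite !inE /= => /andP [_ HF] /andP [_ HF'] EP.
  have HIJ : I = J.
    apply/setP => c'.
    rewrite -(vl_ring c' I F) -(vl_ring c' J F').
    apply: eq_big_seq => e eR.
    have [p [[Hp Hl] Hpar]] := ring_walk eR.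
    have := parity_Phi EP Hp; rewrite /= !parity_vl Hl.
    by rewrite !(eq_bigr _ (fun i _ => Hpar i)).
  subst J; congr pair; apply/setP => x.
  case: (boolP (x \in S)) => xS; last first.
    have /negbTE-> : x \notin F by apply: contra xS => xF; move/fintype.subsetP: HF => /(_ x xF); rewrite inE; case/andP.
    have /negbTE-> : x \notin F' by apply: contra xS => xF; move/fintype.subsetP: HF' => /(_ x xF); rewrite inE; case/andP.
    done.
  have [p [Hp Hl]] := conn xS.
  have := parity_Phi EP Hp; rewrite /= !parity_vl Hl.
  have /negbTE-> : root \notin F by apply/negP => rF; move/fintype.subsetP: HF => /(_ _ rF); rewrite !inE eqxx.
  have /negbTE-> : root \notin F' by apply/negP => rF; move/fintype.subsetP: HF' => /(_ _ rF); rewrite !inE eqxx.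
  by rewrite !addbF; move/addbI.
have sub : Phi @: Dom \subset powerset E.
  apply/fintype.subsetP => e /imsetP [IF _ ->]; rewrite inE; apply/fintype.subsetP => x; rewrite inE; case/andP=> //.
have := subset_leq_card sub; rewrite card_in_imset // cardsX !card_powerset cardsT.
rewrite Ecount (cardsD1 root S) rootS /= add1n subSS subn0 -expnD.
rewrite leq_exp2l // addnC; case: #|C| Cpos => // n _.
by rewrite subSS subn0 addnS ltnn.
Qed.

End Count.

Definition ad (a b : nat) := (a - b) + (b - a).

Lemma tele_iota (F : nat -> bool) n :
  \big[addb/false]_(a <- iota 0 n) (F a (+) F a.+1) = F 0 (+) F n.
Proof.
elim: n => [|n IH]; first by rewrite big_nil addbb.
rewrite -addn1 iotaD big_cat /= IH big_cons big_nil add0n addn1.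
by case: (F 0); case: (F n); case: (F n.+1).
Qed.

Section Geo.
Variables (D' r' m : nat).
Hypothesis m_gt0 : 0 < m.
Hypothesis rm : 4 * m <= r'.+1.

Local Notation D := D'.+2.
Local Notation r := r'.+1.
Definition pt := {ffun 'I_D -> 'I_r}.
Definition cell := {ffun 'I_D -> 'I_m}.

Definition w := r %/ m.
Definition ll := w %/ 2.
Definition hh := ll %/ 2.

Lemma w_ge4 : 4 <= w.
Proof. by rewrite /w leq_divRL. Qed.
Lemma mw_le : m * w <= r.
Proof. by rewrite mulnC leq_divM. Qed.
Lemma ll2 : ll * 2 <= w.
Proof. exact: leq_divM. Qed.
Lemma ll_ge2 : 2 <= ll.
Proof. by rewrite /ll leq_divRL // w_ge4. Qed.
Lemma hh2 : hh * 2 <= ll.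
Proof. exact: leq_divM. Qed.
Lemma hh2' : ll <= hh * 2 + 1.
Proof. rewrite /hh {1}(divn_eq ll 2) leq_add2l; by rewrite -ltnS ltn_mod. Qed.

Implicit Types (c : cell) (k : 'I_D) (x y : pt) (e : pt * pt).

Definition k0 : 'I_D := ord0.
Definition k1 : 'I_D := Ordinal (isT : 1 < D'.+2).

Definition coord (c : cell) (a b : nat) (k : 'I_D) : nat :=
  c k * w + hh + (if k == k0 then a else if k == k1 then b else 0).

Definition rp (c : cell) a b : pt := [ffun k => inord (coord c a b k)].

Lemma coord_bnd c a b k : a <= ll -> b <= ll ->
  c k * w + hh <= coord c a b k <= c k * w + hh + ll.
Proof.
move=> ha hb; rewrite /coord leq_addr /= leq_add2l.
by case: (k == k0) => //; case: (k == k1).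
Qed.

Lemma cw_le c k : c k * w + w <= m * w.
Proof. by rewrite -mulSnr leq_mul2r ltn_ord orbT. Qed.

Lemma rpE c a b k : a <= ll -> b <= ll -> (rp c a b k : nat) = coord c a b k.
Proof.
move=> ha hb; rewrite ffunE inordK //.
have /andP [_ H] := coord_bnd c k ha hb.
have H1 := cw_le c k. have H2 := mw_le. have H3 := ll2. have H4 := hh2. have H5 := ll_ge2.
rewrite ltnS. lia.
Qed.

Definition incell (j x : nat) := (j * w <= x) && (x < j * w + w).

Lemma incell_uniq (j j' x : nat) : incell j x -> incell j' x -> j = j'.
Proof.
have wp : 0 < w by have := w_ge4; lia.
have E0 : forall i, incell i x -> x %/ w = i.
  move=> i /andP [H1 H2].
  rewrite -(subnKC H1) divnMDl // divn_small ?addn0 //; lia.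
by move=> /E0 <- /E0 <-.
Qed.

Definition Acell (c : cell) (x : pt) :=
  [forall k, incell (c k) (x k)] && (c k0 * w + hh + hh < x k0).
Definition side (c : cell) (x : pt) := c k1 * w + hh + hh < x k1.
Definition gg (c : cell) (x y : pt) := Acell c x && Acell c y && (side c x (+) side c y).

Lemma gg_sym c x y : gg c x y = gg c y x.
Proof. rewrite /gg; by case: (Acell c x); case: (Acell c y); case: (side c x); case: (side c y). Qed.

Definition ring (c : cell) : seq (pt * pt) :=
  [seq (rp c a 0, rp c a.+1 0) | a <- iota 0 ll] ++
  [seq (rp c ll a, rp c ll a.+1) | a <- iota 0 ll] ++
  [seq (rp c a ll, rp c a.+1 ll) | a <- iota 0 ll] ++
  [seq (rp c 0 a, rp c 0 a.+1) | a <- iota 0 ll].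

Lemma ring_closed c (f : pt -> bool) :
  \big[addb/false]_(e <- ring c) (f e.1 (+) f e.2) = false.
Proof.
rewrite /ring !big_cat !big_map /=.
rewrite (tele_iota (fun a => f (rp c a 0))) (tele_iota (fun a => f (rp c ll a))).
rewrite (tele_iota (fun a => f (rp c a ll))) (tele_iota (fun a => f (rp c 0 a))).
by case: (f (rp c 0 0)); case: (f (rp c ll 0)); case: (f (rp c 0 ll)); case: (f (rp c ll ll)).
Qed.

Lemma ring_cases c e : e \in ring c -> exists2 a, a < ll &
  [\/ e = (rp c a 0, rp c a.+1 0), e = (rp c ll a, rp c ll a.+1),
      e = (rp c a ll, rp c a.+1 ll) | e = (rp c 0 a, rp c 0 a.+1)].
Proof.
rewrite /ring !mem_cat => H.
case/or4P: (H) => /mapP [a]; rewrite mem_iota add0n => /andP [_ ha] ->; exists a => //.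
- by apply: Or41.
- by apply: Or42.
- by apply: Or43.
- by apply: Or44.
Qed.

Lemma k01 : (k1 == k0) = false. Proof. by []. Qed.

Lemma incell_rp c a b k : a <= ll -> b <= ll -> incell (c k) (rp c a b k).
Proof.
move=> ha hb; rewrite rpE //; have /andP [H1 H2] := coord_bnd c k ha hb.
have H3 := ll2. have H4 := hh2. have H5 := ll_ge2.
rewrite /incell; apply/andP; split; lia.
Qed.

Lemma Acell_rp c c' a b : a <= ll -> b <= ll -> Acell c (rp c' a b) ->
  c = c'.
Proof.
move=> ha hb /andP [/forallP H _]; apply/ffunP => k; apply: val_inj.
exact: incell_uniq (H k) (incell_rp c' k ha hb).
Qed.

Definition box (e : pt * pt) (x : pt) :=
  [forall k, ad (x k) (e.1 k) + ad (x k) (e.2 k) < ll].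

Lemma arith_incell (Q u v x : nat) : hh * 2 <= ll -> ll <= hh * 2 + 1 -> ll * 2 <= w ->
  Q + hh <= u <= Q + hh + ll -> Q + hh <= v <= Q + hh + ll ->
  ad x u + ad x v < ll -> (Q <= x) && (x < Q + w).
Proof. rewrite /ad => *; apply/andP; split; lia. Qed.

Lemma box_incell c e x k : e \in ring c -> box e x -> incell (c k) (x k).
Proof.
move=> eR /forallP /(_ k) Hb.
have [a ha Hc] := ring_cases eR.
have hl : a.+1 <= ll by [].
have hl' : a <= ll by apply: ltnW.
have h0 : 0 <= ll by [].
have hll : ll <= ll by [].
have B := fun a' b' (p : a' <= ll) (q : b' <= ll) => coord_bnd c k p q.
have H1 := hh2. have H2 := hh2'. have H3 := ll2.
move: Hb; case: Hc => -> /=; rewrite !rpE // => Hb; rewrite /incell; apply: (arith_incell H1 H2 H3 _ _ Hb); apply: B => //.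
Qed.

Lemma box_Acell c c' e x : e \in ring c' -> box e x -> Acell c x -> c = c'.
Proof.
move=> eR Hb /andP [/forallP H _]; apply/ffunP => k; apply: val_inj.
exact: incell_uniq (H k) (box_incell k eR Hb).
Qed.

Lemma local c c' e : e \in ring c' -> exists s : pt -> bool,
  forall x y, box e x -> box e y -> gg c x y = s x (+) s y.
Proof.
idtac.
case: (eqVneq c c') => [<-|ncc] eR; last first.
  exists (fun _ => false) => x y Hx _; rewrite /gg.
  case: (boolP (Acell c x)) => // Ax.
  by rewrite (box_Acell eR Hx Ax) eqxx in ncc.
have [a ha Hc] := ring_cases eR.
have hl : a.+1 <= ll by [].
have hl' : a <= ll by apply: ltnW.
have H1 := hh2. have H2 := hh2'. have H3 := ll2. have H5 := ll_ge2.
case: Hc => Ee.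
- exists (fun _ => false) => x y Hx Hy.
  have S0 : forall z, box e z -> side c z = false.
    move=> z /forallP /(_ k1); rewrite Ee /= !rpE // /coord k01 eqxx /side /ad => Hz.
    apply/negbTE; rewrite -leqNgt; lia.
  by rewrite /gg (S0 x Hx) (S0 y Hy) andbF.
- exists (side c) => x y Hx Hy.
  have A0 : forall z, box e z -> Acell c z.
    move=> z Hz; rewrite /Acell; apply/andP; split.
      by apply/forallP => k; apply: box_incell eR Hz.
    move/forallP: Hz => /(_ k0); rewrite Ee /= !rpE // /coord eqxx /ad => Hz.
    lia.
  by rewrite /gg (A0 x Hx) (A0 y Hy).
- exists (fun _ => false) => x y Hx Hy.
  have S0 : forall z, box e z -> side c z = true.
    move=> z /forallP /(_ k1); rewrite Ee /= !rpE // /coord k01 eqxx /side /ad => Hz.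
    lia.
  by rewrite /gg (S0 x Hx) (S0 y Hy) andbF.
- exists (fun _ => false) => x y Hx Hy.
  have A0 : forall z, box e z -> Acell c z = false.
    move=> z /forallP /(_ k0); rewrite Ee /= !rpE // /coord eqxx /ad => Hz.
    rewrite /Acell; apply/negbTE; rewrite negb_and; apply/orP; right; rewrite -leqNgt. lia.
  by rewrite /gg (A0 x Hx).
Qed.

Lemma ring_sum c c' :
  \big[addb/false]_(e <- ring c') gg c e.1 e.2 = (c == c').
Proof.
case: (eqVneq c c') => [<-|ncc]; last first.
  rewrite big1_seq // => e /andP [_ eR]; have [a ha Hc] := ring_cases eR.
  have hl : a.+1 <= ll by [].
  have hl' : a <= ll by apply: ltnW.
  rewrite /gg; case: (boolP (Acell c e.1)) => //= Ax.
  by case: Hc Ax => -> /= /Acell_rp Ax; rewrite Ax // eqxx in ncc.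
have H1 := hh2. have H2 := hh2'. have H3 := ll2. have H5 := ll_ge2.
rewrite /ring !big_cat !big_map /=.
have Ar : forall b, b <= ll -> Acell c (rp c ll b).
  move=> b hb; rewrite /Acell; apply/andP; split.
    by apply/forallP => k; apply: incell_rp.
  rewrite rpE // /coord eqxx; lia.
have Al : forall b, b <= ll -> Acell c (rp c 0 b) = false.
  move=> b hb; rewrite /Acell rpE // /coord eqxx; apply/negbTE; rewrite negb_and; apply/orP; right.
  rewrite -leqNgt; lia.
have Sb : forall a, a <= ll -> side c (rp c a 0) = false.
  move=> a' ha; rewrite /side rpE // /coord k01 eqxx; apply/negbTE; rewrite -leqNgt; lia.
have St : forall a, a <= ll -> side c (rp c a ll) = true.
  move=> a' ha; rewrite /side rpE // /coord k01 eqxx; lia.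
rewrite big1_seq; last first.
  move=> a /andP [_]; rewrite mem_iota add0n => /andP [_ ha].
  by rewrite /gg Sb ?Sb ?andbF //; apply: ltnW.
rewrite [X in _ (+) (_ (+) (_ (+) X))]big1_seq; last first.
  move=> a /andP [_]; rewrite mem_iota add0n => /andP [_ ha].
  rewrite /gg Al //; apply: ltnW => //.
rewrite [X in _ (+) (_ (+) (X (+) _))]big1_seq; last first.
  move=> a /andP [_]; rewrite mem_iota add0n => /andP [_ ha].
  by rewrite /gg St ?St ?andbF //; apply: ltnW.
rewrite big_seq_cond.
rewrite (eq_bigr (fun a => side c (rp c ll a) (+) side c (rp c ll a.+1))); last first.
  move=> a /andP [] ; rewrite mem_iota add0n => /andP [_ ha] _.
  by rewrite /gg !Ar //; apply: ltnW.
rewrite -big_seq_cond tele_iota.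
have -> : side c (rp c ll 0) = false by apply: Sb.
by rewrite St.
Qed.

End Geo.

Local Open Scope ring_scope.

Section Real.
Variable (R : realType) (D r : nat).
Local Notation pt := (gridpt D r).
Local Notation "f[ x , k ]" := (((x : pt) k : nat)%:R : R) (at level 0).

Lemma edist_ge (x y : pt) k : `|f[x,k] - f[y,k]| <= edist R x y.
Proof.
rewrite /edist -sqrtr_sqr ler_sqrt; last by apply: sumr_ge0 => i _; apply: sqr_ge0.
rewrite (bigD1 k) //= lerDl; apply: sumr_ge0 => i _; apply: sqr_ge0.
Qed.

Lemma walk_len_cons (u y : pt) p : walk_len R u (y :: p) = edist R u y + walk_len R y p.
Proof. by rewrite /walk_len /= big_cons. Qed.

Lemma walk_coord (u : pt) p k z : z \in u :: p ->
  `|f[u,k] - f[z,k]| + `|f[z,k] - f[last u p, k]| <= walk_len R u p.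
Proof.
elim: p u z => [|y p IH] u z.
  by rewrite inE => /eqP -> /=; rewrite /walk_len big_nil subrr normr0 add0r.
rewrite walk_len_cons (in_cons u) => /orP [/eqP ->|Hz] /=.
  rewrite subrr normr0 add0r.
  have := IH y y (mem_head _ _); rewrite subrr normr0 add0r => H.
  apply: le_trans (ler_distD f[y,k] _ _) _; apply: lerD => //; exact: edist_ge.
have := IH y z Hz => H.
apply: le_trans _ (lerD (edist_ge u y k) H).
rewrite addrA lerD2r; exact: ler_distD.
Qed.

Lemma ad_R (a b : nat) : ((ad a b)%:R : R) = `|a%:R - b%:R|.
Proof.
rewrite /ad; case: (leqP a b) => H.
  have -> : (a - b = 0)%N by apply/eqP; rewrite subn_eq0.
  by rewrite add0n distrC ger0_norm ?subr_ge0 ?ler_nat // natrB.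
have -> : (b - a = 0)%N by apply/eqP; rewrite subn_eq0 ltnW.
by rewrite addn0 ger0_norm ?subr_ge0 ?ler_nat ?natrB // ltnW.
Qed.

End Real.

Lemma parity_ext (T : finType) (P : pred T) (h h' : T -> T -> bool) u p :
  (forall x y, P x -> P y -> h x y = h' x y) -> all P (u :: p) ->
  parity h u p = parity h' u p.
Proof.
move=> Hh; elim: p u => [|y p IH] u; first by rewrite /parity !big_nil.
rewrite /= => /and3P [Pu Py Pp]; rewrite !parity_cons Hh ?IH // /=; by rewrite ?Py ?Pp.
Qed.

Section Main.
Variables (R : realType) (D' r' m : nat).
Hypothesis m_gt0 : (0 < m)%N.
Hypothesis rm : (4 * m <= r'.+1)%N.
Local Notation pt := (gridpt D'.+2 r'.+1).
Local Notation ll := (ll r' m).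
Local Notation ring := (@ring D' r' m).
Local Notation rp := (@rp D' r' m).
Local Notation box := (@box D' r' m).
Local Notation gg := (@gg D' r' m).

Lemma sum_unit (x y : pt) ks : ((x ks : nat) + 1 = y ks \/ (y ks : nat) + 1 = x ks)%N ->
  (forall k, k != ks -> x k = y k) ->
  \sum_(i < D'.+2) ((((x i : nat)%:R : R) - (y i : nat)%:R) ^+ 2) = 1.
Proof.
move=> H1 H2; rewrite (bigD1 ks) //= big1 ?addr0; last first.
  by move=> i /H2 ->; rewrite subrr expr0n.
case: H1 => <-; rewrite natrD.
  by rewrite opprD addrA subrr add0r sqrrN expr1n.
by rewrite addrAC subrr add0r expr1n.
Qed.

Lemma unit_edist c e : e \in ring c -> edist R e.1 e.2 = 1.
Proof.
move=> eR; rewrite /edist.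
have [a ha Hc] := ring_cases eR.
have hl : (a.+1 <= ll)%N by [].
have hl' : (a <= ll)%N by apply: ltnW.
have l0 : (0 <= ll)%N by [].
have lll : (ll <= ll)%N by [].
suff -> : \sum_(i < D'.+2) ((((e.1 i : nat)%:R : R) - (e.2 i : nat)%:R) ^+ 2) = 1 by rewrite sqrtr1.
case: Hc => -> /=.
- apply: (@sum_unit (rp c a 0) (rp c a.+1 0) (k0 D')).
    by left; rewrite !(rpE m_gt0 rm) // /coord eqxx; lia.
  by move=> k /negbTE kk; apply: val_inj; rewrite /= !(rpE m_gt0 rm) // /coord kk.
- apply: (@sum_unit (rp c ll a) (rp c ll a.+1) (k1 D')).
    by left; rewrite !(rpE m_gt0 rm) // /coord k01 eqxx; lia.
  move=> k /negbTE kk; apply: val_inj; rewrite /= !(rpE m_gt0 rm) // /coord kk.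
  by case: (k == k0 D').
- apply: (@sum_unit (rp c a ll) (rp c a.+1 ll) (k0 D')).
    by left; rewrite !(rpE m_gt0 rm) // /coord eqxx; lia.
  by move=> k /negbTE kk; apply: val_inj; rewrite /= !(rpE m_gt0 rm) // /coord kk.
- apply: (@sum_unit (rp c 0 a) (rp c 0 a.+1) (k1 D')).
    by left; rewrite !(rpE m_gt0 rm) // /coord k01 eqxx; lia.
  move=> k /negbTE kk; apply: val_inj; rewrite /= !(rpE m_gt0 rm) // /coord kk.
  by case: (k == k0 D').
Qed.

Lemma walk_box (e : pt * pt) p : walk_len R e.1 p < ll%:R -> last e.1 p = e.2 ->
  all (box e) (e.1 :: p).
Proof.
move=> Hl Hlast; apply/allP => z Hz; apply/forallP => k.
have := walk_coord R k Hz; rewrite Hlast => H.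
rewrite -(ltr_nat R) natrD !ad_R distrC.
exact: le_lt_trans H Hl.
Qed.

Lemma parity_ring c c' (e : pt * pt) p : e \in ring c' ->
  walk_len R e.1 p < ll%:R -> last e.1 p = e.2 ->
  parity (gg c) e.1 p = gg c e.1 e.2.
Proof.
move=> eR Hl Hlast.
have Hall := walk_box Hl Hlast.
have [s Hs] := local m_gt0 rm c eR.
rewrite (@parity_ext _ (box e) (gg c) (fun x y => s x (+) s y)) //.
rewrite parity_tele Hlast Hs //.
  by move/allP: Hall; apply; apply: mem_head.
by move/allP: Hall; apply; rewrite -Hlast mem_last.
Qed.

End Main.

Lemma extend (T : finType) k (A : {set T}) : (#|A| + k <= #|T|)%N ->
  exists B : {set T}, A \subset B /\ #|B| = (#|A| + k)%N.
Proof.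
elim: k A => [|k IH] A H; first by exists A; rewrite addn0.
have : (0 < #|~: A|)%N by move: (cardsC A) H => <-; rewrite leq_add2l; apply: leq_trans.
case/card_gt0P => x; rewrite inE => xA.
have HB : (#|x |: A| + k <= #|T|)%N by rewrite cardsU1 xA add1n addSnnS.
have [B [sB cB]] := IH _ HB.
exists B; split; last by rewrite cB cardsU1 xA add1n addSnnS.
apply/fintype.subsetP => y yA; apply: (fintype.subsetP sB); by rewrite !inE yA orbT.
Qed.

Lemma bound_lt (R : realType) (r' m : nat) : (0 < m)%N ->
  ((r'.+1)%:R / (2 * m%:R) - 1 : R) < (ll r' m)%:R.
Proof.
move=> m0.
have H : (r'.+1 < (ll r' m).+1 * (m * 2))%N.
  by rewrite /ll /w -divnMA; apply: ltn_ceil; rewrite muln_gt0 m0.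
rewrite ltrBlDr ltr_pdivrMr; last by rewrite mulr_gt0 // ltr0n.
have E1 : (((ll r' m).+1 * (m * 2))%:R : R) = ((ll r' m)%:R + 1) * (2 * m%:R).
  by rewrite -addn1 natrM natrD natrM (mulrC (m%:R)).
by move: H; rewrite -(ltr_nat R) E1.
Qed.

Section Core.
Variables (D' r' m : nat).
Hypothesis m_gt0 : (0 < m)%N.
Hypothesis rm : (4 * m <= r'.+1)%N.
Local Notation pt := (gridpt D'.+2 r'.+1).
Local Notation ll := (ll r' m).
Local Notation ring := (@ring D' r' m).
Local Notation rp := (@rp D' r' m).

Definition ringpt (c : cell D' m) (s a : nat) : pt :=
  if s == 0%N then rp c a 0 else if s == 1%N then rp c ll a
  else if s == 2%N then rp c (ll - a) ll else rp c 0 (ll - a).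

Definition core : {set pt} :=
  [set ringpt j.1 j.2.1 j.2.2 | j : (cell D' m * ('I_4 * 'I_ll))%type].

Lemma card_core : (#|core| <= m ^ D'.+2 * (4 * ll))%N.
Proof.
apply: leq_trans (leq_imset_card _ _) _.
by rewrite cardT -cardT !card_prod card_ffun !card_ord.
Qed.

Lemma ringpt_core c s a (hs : (s < 4)%N) (ha : (a < ll)%N) : ringpt c s a \in core.
Proof.
by apply/imsetP; exists (c, (Ordinal hs, Ordinal ha)).
Qed.

Lemma mem_core c a b : (a <= ll)%N -> (b <= ll)%N ->
  [|| b == 0%N, a == ll, b == ll | a == 0%N] -> rp c a b \in core.
Proof.
have l2 := ll_ge2 m_gt0 rm.
move=> ha hb H.
case: (ltnP a ll) => al; case: (ltnP b ll) => bl.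
- case/or4P: H => /eqP E.
  + by subst b; apply: (@ringpt_core c 0 a).
  + by rewrite E ltnn in al.
  + by rewrite E ltnn in bl.
  + subst a; case: (posnP b) => b0; first by subst b; apply: (@ringpt_core c 0 0).
    have hb' : (ll - b < ll)%N by lia.
    have -> : rp c 0 b = ringpt c 3 (ll - b) by rewrite /ringpt /= subKn.
    exact: ringpt_core.
- have Eb : b = ll by lia.
  subst b; case: (posnP a) => a0.
    subst a; have h0 : (0 < ll)%N by lia.
    by have := @ringpt_core c 3 0 isT h0; rewrite /ringpt /= subn0.
  have hb' : (ll - a < ll)%N by lia.
  have -> : rp c a ll = ringpt c 2 (ll - a) by rewrite /ringpt /= subKn.
  exact: ringpt_core.
- have Ea : a = ll by lia.
  by subst a; apply: (@ringpt_core c 1 b).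
- have Ea : a = ll by lia.
  have Eb : b = ll by lia.
  subst a b; have h0 : (0 < ll)%N by lia.
  by have := @ringpt_core c 2 0 isT h0; rewrite /ringpt /= subn0.
Qed.

Lemma ring_core c e : e \in ring c -> e.1 \in core /\ e.2 \in core.
Proof.
move=> eR; have [a ha Hc] := ring_cases eR.
have hl : (a.+1 <= ll)%N by [].
have hl' : (a <= ll)%N by apply: ltnW.
have l0 : (0 <= ll)%N by [].
have lll : (ll <= ll)%N by [].
by case: Hc => -> /=; split; apply: mem_core => //; rewrite eqxx ?orbT.
Qed.

End Core.

Unset Implicit Arguments.

Theorem theorem7 (R : realType) (D r m n : nat) :
  (2 <= D)%N -> (4 <= r)%N -> (1 <= m)%N -> (4 * m <= r)%N ->
  (2 * r * m ^ D.-1 <= n)%N -> (n <= r ^ D)%N ->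
  exists S : {set gridpt D r},
    #|S| = n /\
    (((r%:R : R) / (2 * m%:R) - 1)%:E <= Delta R S (m ^ D - 1))%E.
Proof.
case: D => [|[|D']] // _; case: r => [|r'] // _ m_gt0 rm Hn1 Hn2.
have Hcore : (#|core D' r' m| <= n)%N.
  apply: leq_trans (card_core D' r' m) _; apply: leq_trans Hn1.
  have := leq_divM (r'.+1 %/ m) 2; have := leq_divM r'.+1 m.
  rewrite /ll /w expnS /= => H1 H2.
  have H3 : (ll r' m * 2 * m <= r'.+1)%N.
    apply: leq_trans H1; rewrite leq_mul2r; apply/orP; right; exact: H2.
  rewrite /ll /w in H3.
  rewrite (mulnC m) -mulnA mulnC; rewrite leq_mul2r; apply/orP; right.
  move: H3; lia.
have [S [coreS cardS]] : exists S : {set gridpt D'.+2 r'.+1},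
    core D' r' m \subset S /\ #|S| = n.
  have := @extend (gridpt D'.+2 r'.+1) (n - #|core D' r' m|) (core D' r' m).
  rewrite subnKC //; apply; by rewrite card_ffun !card_ord.
exists S; split => //.
rewrite /Delta; apply: le_ereal_inf_tmp => _ [E [HE HEc] <-].
rewrite leNgt; apply/negP => Hlt.
set bnd := ((r'.+1)%:R / (2 * m%:R) - 1 : R) in Hlt.
have Hbl : bnd < (ll r' m)%:R by apply: bound_lt.
have HP : forall u v, u \in S -> v \in S -> u != v ->
    (graph_dist R E u v * ((edist R u v)^-1)%:E < bnd%:E)%E.
  move=> u v uS vS uv; apply: le_lt_trans Hlt; apply: ereal_sup_ubound.
  by exists (u, v) => //=; rewrite uS vS uv.
pose c0 : cell D' m := [ffun _ => Ordinal m_gt0].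
have rootS : rp r' c0 0 0 \in S.
  apply: (fintype.subsetP coreS); apply: mem_core => //; by rewrite eqxx.
apply: (@count_contra _ (cell D' m) S E _ (@gg D' r' m) _ (@ring D' r' m) _ _ _ (rp r' c0 0 0)).
- by move=> e /HE [].
- exact: gg_sym.
- exact: ring_closed.
- exact: ring_sum.
- move=> c' e eR.
  have [c1 c2] := ring_core m_gt0 rm eR.
  have e1S := fintype.subsetP coreS _ c1.
  have e2S := fintype.subsetP coreS _ c2.
  have Hu := unit_edist R m_gt0 rm eR.
  have ne : e.1 != e.2.
    apply/eqP => E12; move: Hu; rewrite /edist E12 big1 ?sqrtr0 => [/eqP|i _].
      by rewrite eq_sym oner_eq0.
    by rewrite subrr expr0n.
  have := HP _ _ e1S e2S ne; rewrite Hu invr1 mule1 => Hg.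
  have [y [p Hw <-] Hy] := ereal_inf_lt Hg.
  exists p; split; first exact: Hw.
  move=> c; rewrite lte_fin in Hy.
  case: Hw => _ Hlast.
  apply: (parity_ring m_gt0 rm c eR) => //.
  exact: lt_trans Hy Hbl.
- exact: rootS.
- move=> x xS; case: (eqVneq x (rp r' c0 0 0)) => [->|xr]; first by exists [::].
  have rx : rp r' c0 0 0 != x by rewrite eq_sym.
  have Hx := HP _ _ rootS xS rx.
  have [k Hk] : exists k, rp r' c0 0 0 k != x k.
    case: (boolP [exists k, rp r' c0 0 0 k != x k]) => [/existsP //|/existsPn H].
    have Ex : rp r' c0 0 0 = x by apply/ffunP => k; apply/eqP; move: (H k); rewrite negbK.
    by rewrite Ex eqxx in rx.
  have pos : 0 < edist R (rp r' c0 0 0) x.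
    apply: lt_le_trans (edist_ge R _ _ k).
    by rewrite normr_gt0 subr_eq0 eqr_nat val_eqE.
  have Hfin : (graph_dist R E (rp r' c0 0 0) x < +oo)%E.
    rewrite ltey; apply/eqP => Hoo; move: Hx; rewrite Hoo gt0_mulye ?lte_fin ?invr_gt0 //.
  have [y [p Hw _] _] := ereal_inf_lt Hfin.
  by exists p.
- by rewrite HEc card_ffun !card_ord.
- by rewrite card_ffun !card_ord expn_gt0 m_gt0.
Qed.
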